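(* Let $\Gamma$ be a finitely generated discrete group, $A\trianglelefteq\Gamma$ normal of finite index, $Q=\Gamma/A$, and $\psi\colon Q\to PU(n)$ a homomorphism. The finite group $\mathrm{Hom}(Q,S^1)$ acts freely on $\mathrm{Hom}_A(\Gamma,U(n))_\psi$ by $(\chi\cdot\rho)(\gamma)=\chi([\gamma])\rho(\gamma)$, and the restriction map $R\colon\mathrm{Hom}_A(\Gamma,U(n))_\psi\to\mathrm{Hom}(A,S^1)$, $\rho\mapsto\rho|_A$, induces a homeomorphism from the orbit space $\mathrm{Hom}_A(\Gamma,U(n))_\psi/\mathrm{Hom}(Q,S^1)$ onto the image $R(\mathrm{Hom}_A(\Gamma,U(n))_\psi)$. In particular $R$ is a finite covering map onto its image with structure group $\mathrm{Hom}(Q,S^1)$.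
   Context: $S^1\subset U(n)$ denotes the scalar matrices (identified with the unit circle), $PU(n)=U(n)/S^1$. $\mathrm{Hom}_A(\Gamma,U(n))$ is the set of $\rho\in\mathrm{Hom}(\Gamma,U(n))$ with $\rho(A)\subset S^1$ (so $\rho|_A\in\mathrm{Hom}(A,S^1)$), and $\mathrm{Hom}_A(\Gamma,U(n))_\psi$ is the subset with induced homomorphism $\bar\rho\colon Q\to PU(n)$ equal to $\psi$. All representation spaces carry the topology of pointwise convergence. *)

(* Defs.v *)
From Stdlib Require Import Reals List.
From mathcomp Require Import ssreflect ssrfun ssrbool eqtype ssrnat seq fintype.

Set Implicit Arguments.
Unset Strict Implicit.

Record CC := mkC { re : R; im : R }.
Definition CC0 : CC := mkC 0%R 0%R.
Definition CC1 : CC := mkC 1%R 0%R.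
Definition Cadd (z w : CC) : CC := mkC (re z + re w)%R (im z + im w)%R.
Definition Cmul (z w : CC) : CC :=
  mkC (re z * re w - im z * im w)%R (re z * im w + im z * re w)%R.
Definition Cconj (z : CC) : CC := mkC (re z) (- im z)%R.
Definition Cnorm2 (z : CC) : R := (re z * re z + im z * im z)%R.
Definition unitC (z : CC) : Prop := Cnorm2 z = 1%R.

Definition Mat (n : nat) := 'I_n -> 'I_n -> CC.
Definition Csum (n : nat) (f : 'I_n -> CC) : CC :=
  seq.foldr Cadd CC0 (seq.map f (enum 'I_n)).
Definition mmul (n : nat) (A B : Mat n) : Mat n :=
  fun i j => Csum (fun k => Cmul (A i k) (B k j)).
Definition madj (n : nat) (A : Mat n) : Mat n := fun i j => Cconj (A j i).
Definition idm (n : nat) : Mat n := fun i j => if i == j then CC1 else CC0.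
Definition scal (n : nat) (z : CC) (A : Mat n) : Mat n := fun i j => Cmul z (A i j).
Definition scalarm (n : nat) (z : CC) : Mat n := scal z (@idm n).
Definition unitary (n : nat) (A : Mat n) : Prop :=
  mmul A (madj A) = @idm n /\ mmul (madj A) A = @idm n.

Definition Quot (X : Type) (E : X -> X -> Prop) : Type :=
  { S : X -> Prop | exists x, S = E x }.
Definition qproj (X : Type) (E : X -> X -> Prop) (x : X) : Quot E :=
  exist (fun S => exists y, S = E y) (E x) (ex_intro (fun y => E x = E y) x erefl).

Definition pclass (n : nat) (U : Mat n) : Mat n -> Prop :=
  fun V => exists z, unitC z /\ V = scal z U.
Definition PU (n : nat) : Type :=
  { S : Mat n -> Prop | exists U, unitary U /\ S = pclass U }.

Definition is_group (G : Type) (mul : G -> G -> G) (one : G) (inv : G -> G) : Prop :=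
  (forall x y z, mul x (mul y z) = mul (mul x y) z) /\
  (forall x, mul one x = x) /\ (forall x, mul x one = x) /\
  (forall x, mul (inv x) x = one) /\ (forall x, mul x (inv x) = one).

Inductive generated (G : Type) (mul : G -> G -> G) (one : G) (inv : G -> G)
  (gens : list G) : G -> Prop :=
| gen_one : generated mul one inv gens one
| gen_in : forall g, In g gens -> generated mul one inv gens g
| gen_inv : forall g, generated mul one inv gens g -> generated mul one inv gens (inv g)
| gen_mul : forall g h, generated mul one inv gens g -> generated mul one inv gens h ->
    generated mul one inv gens (mul g h).

Definition fin_generated (G : Type) (mul : G -> G -> G) (one : G) (inv : G -> G) : Prop :=
  exists gens : list G, forall g, generated mul one inv gens g.

Definition normal_subgroup (G : Type) (mul : G -> G -> G) (one : G) (inv : G -> G)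
  (A : G -> Prop) : Prop :=
  A one /\ (forall a b, A a -> A b -> A (mul a b)) /\ (forall a, A a -> A (inv a)) /\
  (forall g a, A a -> A (mul (mul g a) (inv g))).

Definition finite_index (G : Type) (mul : G -> G -> G) (inv : G -> G) (A : G -> Prop) : Prop :=
  exists reps : list G, forall g, exists r, In r reps /\ A (mul (inv r) g).

Definition coset_rel (G : Type) (mul : G -> G -> G) (inv : G -> G) (A : G -> Prop) :
  G -> G -> Prop := fun g h => A (mul (inv g) h).
Definition Quo (G : Type) (mul : G -> G -> G) (inv : G -> G) (A : G -> Prop) : Type :=
  Quot (coset_rel mul inv A).
Definition qmap (G : Type) (mul : G -> G -> G) (inv : G -> G) (A : G -> Prop) (g : G)
  : Quo mul inv A := qproj (coset_rel mul inv A) g.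

(* Hom(Q, S^1); the group law of Q is the one induced by the projection *)
Definition HomQS1 (G : Type) (mul : G -> G -> G) (inv : G -> G) (A : G -> Prop)
  (chi : Quo mul inv A -> CC) : Prop :=
  (forall q, unitC (chi q)) /\
  (forall g h, chi (qmap mul inv A (mul g h)) = Cmul (chi (qmap mul inv A g)) (chi (qmap mul inv A h))).

Definition proj_hom (G : Type) (mul : G -> G -> G) (inv : G -> G) (A : G -> Prop) (n : nat)
  (psi : Quo mul inv A -> PU n) : Prop :=
  forall g h (U V : Mat n), unitary U -> unitary V ->
    proj1_sig (psi (qmap mul inv A g)) = pclass U ->
    proj1_sig (psi (qmap mul inv A h)) = pclass V ->
    proj1_sig (psi (qmap mul inv A (mul g h))) = pclass (mmul U V).

Definition HomA_psi (G : Type) (mul : G -> G -> G) (inv : G -> G) (A : G -> Prop) (n : nat)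
  (psi : Quo mul inv A -> PU n) (rho : G -> Mat n) : Prop :=
  (forall g, unitary (rho g)) /\
  (forall g h, rho (mul g h) = mmul (rho g) (rho h)) /\
  (forall a, A a -> exists z, unitC z /\ rho a = @scalarm n z) /\
  (forall g, proj1_sig (psi (qmap mul inv A g)) = pclass (rho g)).

Definition act (G : Type) (mul : G -> G -> G) (inv : G -> G) (A : G -> Prop) (n : nat)
  (chi : Quo mul inv A -> CC) (rho : G -> Mat n) : G -> Mat n :=
  fun g => scal (chi (qmap mul inv A g)) (rho g).

(* restriction to A, identifying a scalar matrix z I with z \in S^1
   (read off the (0,0) entry; n > 0) *)
Definition restr (G : Type) (A : G -> Prop) (n : nat) (hn : (0 < n)%N) (rho : G -> Mat n)
  : {a : G | A a} -> CC :=
  fun a => rho (proj1_sig a) (Ordinal hn) (Ordinal hn).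

Definition topo (X : Type) := (X -> Prop) -> Prop.

Definition Ctopo : topo CC := fun O =>
  forall z, O z -> exists eps, (0 < eps)%R /\
    forall w, (Rabs (re w - re z) < eps)%R -> (Rabs (im w - im z) < eps)%R -> O w.

(* product topology = topology of pointwise convergence on I -> Y *)
Definition ptopo (I Y : Type) (tY : topo Y) : topo (I -> Y) := fun O =>
  forall f, O f -> exists (l : list I) (V : I -> Y -> Prop),
    (forall i, tY (V i)) /\ (forall i, V i (f i)) /\
    (forall h, (forall i, In i l -> V i (h i)) -> O h).

Definition Mtopo (n : nat) : topo (Mat n) := ptopo (ptopo Ctopo).

Definition sub_topo (X : Type) (tX : topo X) (S : X -> Prop) : topo {x | S x} :=
  fun V => exists O, tX O /\ forall x : {x | S x}, V x <-> O (proj1_sig x).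

Definition quot_topo (X : Type) (tX : topo X) (E : X -> X -> Prop) : topo (Quot E) :=
  fun V => tX (fun x => V (qproj E x)).

Definition continuous (X Y : Type) (tX : topo X) (tY : topo Y) (f : X -> Y) : Prop :=
  forall V, tY V -> tX (fun x => V (f x)).

Definition homeomorphism (X Y : Type) (tX : topo X) (tY : topo Y) (f : X -> Y) : Prop :=
  exists g : Y -> X, (forall x, g (f x) = x) /\ (forall y, f (g y) = y) /\
    continuous tX tY f /\ continuous tY tX g.

Definition relopen (X : Type) (tX : topo X) (S U : X -> Prop) : Prop :=
  (forall x, U x -> S x) /\ exists O, tX O /\ forall x, S x -> (U x <-> O x).

Definition img (X Y : Type) (f : X -> Y) (U : X -> Prop) : Y -> Prop :=
  fun y => exists x, U x /\ f x = y.

Definition homeo_on (X Y : Type) (tX : topo X) (tY : topo Y) (S : X -> Prop) (T : Y -> Prop)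
  (f : X -> Y) : Prop :=
  (forall x, S x -> T (f x)) /\ (forall y, T y -> exists x, S x /\ f x = y) /\
  (forall x x', S x -> S x' -> f x = f x' -> x = x') /\
  (forall U, (forall x, U x -> S x) -> (relopen tX S U <-> relopen tY T (img f U))).

Arguments sub_topo [X] tX S _.
Arguments quot_topo [X] tX E _.

(* Main.v *)
Require Import Defs.
From Stdlib Require Import Reals List Lra Psatz Lia.
From Stdlib Require Import Classical ClassicalEpsilon FunctionalExtensionality PropExtensionality ProofIrrelevance.
From mathcomp Require Import ssreflect ssrfun ssrbool eqtype ssrnat seq fintype.
Set Implicit Arguments.
Unset Strict Implicit.
Local Open Scope R_scope.

Lemma CC_ext (z w : CC) : re z = re w -> im z = im w -> z = w.
Proof. destruct z, w; simpl; intros -> ->; reflexivity. Qed.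

Ltac gnra := repeat match goal with z : CC |- _ => let a := fresh "a" in let b := fresh "b" in destruct z as [a b] end; simpl in *; nra.
Ltac cc := apply CC_ext; simpl; ring.

Lemma CmulC z w : Cmul z w = Cmul w z. Proof. cc. Qed.
Lemma CmulA z w u : Cmul z (Cmul w u) = Cmul (Cmul z w) u. Proof. cc. Qed.
Lemma Cmul1 z : Cmul CC1 z = z. Proof. destruct z; cc. Qed.
Lemma Cmul1r z : Cmul z CC1 = z. Proof. destruct z; cc. Qed.
Lemma Cmul0r z : Cmul z CC0 = CC0. Proof. cc. Qed.
Lemma CaddC z w : Cadd z w = Cadd w z. Proof. cc. Qed.
Lemma Cadd0 z : Cadd CC0 z = z. Proof. destruct z; cc. Qed.
Lemma CmulDr z a b : Cmul z (Cadd a b) = Cadd (Cmul z a) (Cmul z b). Proof. cc. Qed.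
Lemma CconjM z w : Cconj (Cmul z w) = Cmul (Cconj z) (Cconj w). Proof. cc. Qed.
Lemma CconjK z : Cconj (Cconj z) = z. Proof. destruct z; cc. Qed.
Lemma Cnorm2M z w : Cnorm2 (Cmul z w) = Cnorm2 z * Cnorm2 w.
Proof. unfold Cnorm2; simpl; ring. Qed.
Lemma Cnorm2_ge0 z : 0 <= Cnorm2 z. Proof. unfold Cnorm2; nra. Qed.
Lemma Cnorm2_conj z : Cnorm2 (Cconj z) = Cnorm2 z. Proof. unfold Cnorm2; simpl; ring. Qed.
Lemma Cnorm2_0 z : Cnorm2 z = 0 -> z = CC0.
Proof. unfold Cnorm2; intro h; destruct z as [a b]; simpl in *; apply CC_ext; simpl; nra. Qed.
Lemma unitC1 : unitC CC1. Proof. unfold unitC, Cnorm2; simpl; ring. Qed.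
Lemma unitCM z w : unitC z -> unitC w -> unitC (Cmul z w).
Proof. unfold unitC; rewrite Cnorm2M; intros -> ->; ring. Qed.
Lemma unitC_conj z : unitC z -> unitC (Cconj z).
Proof. unfold unitC; rewrite Cnorm2_conj; auto. Qed.
Lemma unit_conj_mul z : unitC z -> Cmul (Cconj z) z = CC1.
Proof. unfold unitC, Cnorm2; intro h; apply CC_ext; simpl; nra. Qed.
Lemma unit_mul_conj z : unitC z -> Cmul z (Cconj z) = CC1.
Proof. intro h; rewrite CmulC; apply unit_conj_mul; auto. Qed.
Lemma unitC_ne0 z : unitC z -> z <> CC0.
Proof. unfold unitC, Cnorm2; intros h e; subst; simpl in h; lra. Qed.

Lemma Cmul_cancel z w u : u <> CC0 -> Cmul z u = Cmul w u -> z = w.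
Proof.
  intros hu e.
  assert (hn : Cnorm2 u <> 0) by (intro h0; apply hu; apply Cnorm2_0; auto).
  assert (e2 : Cmul (Cmul z u) (Cconj u) = Cmul (Cmul w u) (Cconj u)) by (rewrite e; auto).
  destruct z as [a b], w as [c d], u as [p q]; unfold Cnorm2 in hn; simpl in *.
  injection e2; intros e3 e4.
  assert (ea : a * (p*p+q*q) = c * (p*p+q*q)) by nra.
  assert (eb : b * (p*p+q*q) = d * (p*p+q*q)) by nra.
  apply CC_ext; simpl; [apply (Rmult_eq_reg_r (p*p+q*q)) | apply (Rmult_eq_reg_r (p*p+q*q))]; auto.
Qed.

Definition cd2 (z w : CC) : R := (re z - re w)*(re z - re w) + (im z - im w)*(im z - im w).
Lemma sq_ge0 x : 0 <= x * x. Proof. pose proof (Rle_0_sqr x); unfold Rsqr in *; lra. Qed.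
Lemma cd2_ge0 z w : 0 <= cd2 z w. Proof. unfold cd2; pose proof (sq_ge0 (re z - re w)); pose proof (sq_ge0 (im z - im w)); lra. Qed.
Lemma cd2_sym z w : cd2 z w = cd2 w z. Proof. unfold cd2; ring. Qed.
Lemma cd2_refl z : cd2 z z = 0. Proof. unfold cd2; ring. Qed.
Lemma cd2_tri x y z : cd2 x z <= 2 * cd2 x y + 2 * cd2 y z.
Proof. unfold cd2; pose proof (sq_ge0 (re x - 2 * re y + re z)); pose proof (sq_ge0 (im x - 2* im y + im z)); nra. Qed.
Lemma cd2_0 z w : cd2 z w = 0 -> z = w.
Proof. unfold cd2; intro h; pose proof (sq_ge0 (re z - re w)); pose proof (sq_ge0 (im z - im w)).
  assert (h1 : (re z - re w) * (re z - re w) = 0) by lra.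
  assert (h2 : (im z - im w) * (im z - im w) = 0) by lra.
  apply Rsqr_0_uniq in h1; apply Rsqr_0_uniq in h2; apply CC_ext; lra. Qed.
Lemma cd2_mul u z w : cd2 (Cmul u z) (Cmul u w) = Cnorm2 u * cd2 z w.
Proof. unfold cd2, Cnorm2; simpl; ring. Qed.
Lemma cd2_mulr u z w : cd2 (Cmul z u) (Cmul w u) = Cnorm2 u * cd2 z w.
Proof. rewrite (CmulC z) (CmulC w); apply cd2_mul. Qed.
Lemma cd2_unit u z w : unitC u -> cd2 (Cmul u z) (Cmul u w) = cd2 z w.
Proof. intro h; rewrite cd2_mul; unfold unitC in h; rewrite h; ring. Qed.
Lemma cd2_unitr u z w : unitC u -> cd2 (Cmul z u) (Cmul w u) = cd2 z w.
Proof. intro h; rewrite cd2_mulr; unfold unitC in h; rewrite h; ring. Qed.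
Lemma cd2_prod a b a' b' : unitC a -> unitC b' ->
  cd2 (Cmul a b) (Cmul a' b') <= 2 * cd2 a a' + 2 * cd2 b b'.
Proof.
  intros ha hb. eapply Rle_trans. apply (cd2_tri _ (Cmul a b')).
  rewrite cd2_unit // cd2_unitr // ; lra.
Qed.
Lemma cd2_norm_bound u v : Cnorm2 u <= 2 * Cnorm2 v + 2 * cd2 u v.
Proof. unfold cd2, Cnorm2; pose proof (sq_ge0 (re u - 2 * re v)); pose proof (sq_ge0 (im u - 2* im v)); nra. Qed.

Lemma sum_scal (T : Type) (s : list T) (z : CC) (f : T -> CC) :
  foldr Cadd CC0 (map (fun k => Cmul z (f k)) s) = Cmul z (foldr Cadd CC0 (map f s)).
Proof. elim: s => [|x s IH] /=; first by rewrite Cmul0r. by rewrite IH CmulDr. Qed.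

Lemma re_sum (l : list CC) : re (foldr Cadd CC0 l) = foldr Rplus 0 (map re l).
Proof. elim: l => [|x l IH] //=. by rewrite IH. Qed.

Lemma sum_nonneg (l : list R) : (forall y, In y l -> 0 <= y) -> 0 <= foldr Rplus 0 l.
Proof.
  elim: l => [|y l IH] /= h; first lra.
  have := h y (or_introl erefl). have := IH (fun z hz => h z (or_intror hz)). lra.
Qed.

Lemma sum_nonneg_ge (l : list R) x : (forall y, In y l -> 0 <= y) -> In x l -> x <= foldr Rplus 0 l.
Proof.
  elim: l => [|y l IH] //= h [->|hx].
  - have := sum_nonneg (fun z hz => h z (or_intror hz)). lra.
  - have := h y (or_introl erefl). have := IH (fun z hz => h z (or_intror hz)) hx. lra.
Qed.

Lemma In_of_mem (T : eqType) (x : T) (s : seq T) : x \in s -> In x s.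
Proof. elim: s => [|y s IH] //=. rewrite in_cons => /orP [/eqP ->|h]; auto. Qed.

Lemma In_enum n (i : 'I_n) : In i (enum 'I_n).
Proof. apply In_of_mem. by rewrite mem_enum. Qed.

Lemma mmul_scal n a b (U V : Mat n) : mmul (scal a U) (scal b V) = scal (Cmul a b) (mmul U V).
Proof.
  apply functional_extensionality => i; apply functional_extensionality => j.
  rewrite /mmul /scal /Csum -sum_scal. f_equal. apply List.map_ext => k.
  apply CC_ext; simpl; ring.
Qed.

Lemma madj_scal n a (U : Mat n) : madj (scal a U) = scal (Cconj a) (madj U).
Proof.
  apply functional_extensionality => i; apply functional_extensionality => j.
  by rewrite /madj /scal CconjM.
Qed.

Lemma scal_scal n a b (U : Mat n) : scal a (scal b U) = scal (Cmul a b) U.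
Proof.
  apply functional_extensionality => i; apply functional_extensionality => j.
  by rewrite /scal CmulA.
Qed.

Lemma scal1 n (U : Mat n) : scal CC1 U = U.
Proof.
  apply functional_extensionality => i; apply functional_extensionality => j.
  by rewrite /scal Cmul1.
Qed.

Lemma unitary_scal n z (U : Mat n) : unitC z -> unitary U -> unitary (scal z U).
Proof.
  move=> hz [h1 h2]; split; rewrite madj_scal mmul_scal ?h1 ?h2.
  - by rewrite unit_mul_conj // scal1.
  - by rewrite unit_conj_mul // scal1.
Qed.

Lemma unitary_row n (U : Mat n) i :
  unitary U -> foldr Rplus 0 (map (fun k => Cnorm2 (U i k)) (enum 'I_n)) = 1.
Proof.
  move=> [h1 _]. have := f_equal (fun M => re (M i i)) h1.
  rewrite /mmul /idm eqxx /Csum re_sum /= -seq.map_comp => <-.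
  f_equal. apply List.map_ext => k. rewrite /Cnorm2 /=. ring.
Qed.

Lemma unitary_entry_le1 n (U : Mat n) i k : unitary U -> Cnorm2 (U i k) <= 1.
Proof.
  move=> hU. rewrite -(unitary_row i hU). apply sum_nonneg_ge.
  - move=> y /in_map_iff [k' [<- _]]. apply Cnorm2_ge0.
  - apply in_map_iff. exists k; split; auto. apply In_enum.
Qed.

Lemma unitary_nz n (U : Mat n) i : unitary U -> exists k, U i k <> CC0.
Proof.
  move=> hU. apply NNPP => hn.
  have h0 : forall k, U i k = CC0 by move=> k; apply NNPP => hk; apply hn; exists k.
  have := unitary_row i hU.
  have -> : map (fun k => Cnorm2 (U i k)) (enum 'I_n) = map (fun _ => 0) (enum 'I_n).
  { apply List.map_ext => k. rewrite h0 /Cnorm2 /=. ring. }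
  have -> : forall s : seq 'I_n, foldr Rplus 0 (map (fun _ => 0) s) = 0.
  { elim => [|x s IH] //=. rewrite IH; ring. }
  lra.
Qed.

Lemma scal_inj n (U : Mat n) z w : (0 < n)%N -> unitary U -> scal z U = scal w U -> z = w.
Proof.
  move=> hn hU e. have [k hk] := unitary_nz (Ordinal hn) hU.
  have := f_equal (fun M => M (Ordinal hn) k) e. rewrite /scal => e2.
  exact: Cmul_cancel hk e2.
Qed.

Lemma scalarm_scal n c z : scal c (@scalarm n z) = scalarm (Cmul c z).
Proof. by rewrite /scalarm scal_scal. Qed.

Lemma scalarm_entry n z (i : 'I_n) : scalarm z i i = z.
Proof. by rewrite /scalarm /scal /idm eqxx Cmul1r. Qed.

Lemma pclass_scal n c (U : Mat n) : unitC c -> pclass (scal c U) = pclass U.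
Proof.
  move=> hc. apply functional_extensionality => V; apply propositional_extensionality.
  split => [[z [hz ->]]|[z [hz ->]]].
  - exists (Cmul z c); split; [exact: unitCM|]. by rewrite scal_scal.
  - exists (Cmul z (Cconj c)); split; [apply unitCM => //; exact: unitC_conj|].
    by rewrite scal_scal -CmulA unit_conj_mul // Cmul1r.
Qed.

Lemma pclass_self n (U : Mat n) : pclass U U.
Proof. exists CC1; split; [exact unitC1| by rewrite scal1]. Qed.

Lemma choice_fun (X Y : Type) (P : X -> Y -> Prop) : (forall x, exists y, P x y) -> exists f : X -> Y, forall x, P x (f x).
Proof.
  move=> h. exists (fun x => proj1_sig (constructive_indefinite_description _ (h x))).
  move=> x. exact: proj2_sig (constructive_indefinite_description _ (h x)).
Qed.

Lemma sig_eq (X : Type) (P : X -> Prop) (a b : {x | P x}) : proj1_sig a = proj1_sig b -> a = b.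
Proof. destruct a as [a pa], b as [b pb]; simpl; intros ->. f_equal; apply proof_irrelevance. Qed.

Lemma g_assoc G mul one inv (hG : @is_group G mul one inv) x y z : mul x (mul y z) = mul (mul x y) z.
Proof. by case: hG. Qed.
Lemma g_1l G mul one inv (hG : @is_group G mul one inv) x : mul one x = x.
Proof. by case: hG => _ []. Qed.
Lemma g_1r G mul one inv (hG : @is_group G mul one inv) x : mul x one = x.
Proof. by case: hG => _ [] _ []. Qed.
Lemma g_Vl G mul one inv (hG : @is_group G mul one inv) x : mul (inv x) x = one.
Proof. by case: hG => _ [] _ [] _ []. Qed.
Lemma g_Vr G mul one inv (hG : @is_group G mul one inv) x : mul x (inv x) = one.
Proof. by case: hG => _ [] _ [] _ []. Qed.
Lemma g_Kl G mul one inv (hG : @is_group G mul one inv) x y : mul (inv x) (mul x y) = y.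
Proof. by rewrite (g_assoc hG) (g_Vl hG) (g_1l hG). Qed.
Lemma g_Kr G mul one inv (hG : @is_group G mul one inv) x y : mul x (mul (inv x) y) = y.
Proof. by rewrite (g_assoc hG) (g_Vr hG) (g_1l hG). Qed.
Lemma g_inv_uniq G mul one inv (hG : @is_group G mul one inv) x y : mul x y = one -> y = inv x.
Proof. move=> h. by rewrite -(g_Kl hG x y) h (g_1r hG). Qed.
Lemma g_invM G mul one inv (hG : @is_group G mul one inv) x y : inv (mul x y) = mul (inv y) (inv x).
Proof.
  symmetry; apply (g_inv_uniq hG).
  by rewrite -(g_assoc hG) (g_assoc hG y) (g_Vr hG) (g_1l hG) (g_Vr hG).
Qed.
Lemma g_invK G mul one inv (hG : @is_group G mul one inv) x : inv (inv x) = x.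
Proof. symmetry; apply (g_inv_uniq hG); apply (g_Vl hG). Qed.
Lemma g_inv1 G mul one inv (hG : @is_group G mul one inv) : inv one = one.
Proof. symmetry; apply (g_inv_uniq hG); apply (g_1l hG). Qed.

Lemma n_one G mul one inv A (hA : @normal_subgroup G mul one inv A) : A one.
Proof. by case: hA. Qed.
Lemma n_mul G mul one inv A (hA : @normal_subgroup G mul one inv A) a b : A a -> A b -> A (mul a b).
Proof. case: hA => _ [] h _; auto. Qed.
Lemma n_inv G mul one inv A (hA : @normal_subgroup G mul one inv A) a : A a -> A (inv a).
Proof. case: hA => _ [] _ [] h _; auto. Qed.
Lemma n_conj G mul one inv A (hA : @normal_subgroup G mul one inv A) g a : A a -> A (mul (mul g a) (inv g)).
Proof. case: hA => _ [] _ [] _ h; auto. Qed.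

Lemma qmap_eq G mul one inv A (hG : @is_group G mul one inv) (hA : normal_subgroup mul one inv A) g h :
  A (mul (inv g) h) -> qmap mul inv A g = qmap mul inv A h.
Proof.
  move=> hgh. apply sig_eq => /=. apply functional_extensionality => k.
  apply propositional_extensionality. rewrite /coset_rel. split => hk.
  - have -> : mul (inv h) k = mul (inv (mul (inv g) h)) (mul (inv g) k).
    { by rewrite (g_invM hG) (g_invK hG) -(g_assoc hG) (g_Kr hG). }
    apply (n_mul hA) => //; exact: (n_inv hA).
  - have -> : mul (inv g) k = mul (mul (inv g) h) (mul (inv h) k).
    { by rewrite -(g_assoc hG) (g_Kr hG). }
    exact: (n_mul hA).
Qed.

Lemma qmap_eq_inv G mul one inv A (hG : @is_group G mul one inv) (hA : normal_subgroup mul one inv A) g h :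
  qmap mul inv A g = qmap mul inv A h -> A (mul (inv g) h).
Proof.
  move=> e. have := f_equal (fun q => proj1_sig q h) e. rewrite /= /coset_rel => ->.
  rewrite (g_Vl hG). exact: (n_one hA).
Qed.

Lemma qmap_surj G mul inv A (q : Quo mul inv A) : exists g : G, q = qmap mul inv A g.
Proof.
  destruct q as [S [g hg]]. exists g. apply sig_eq => /=. exact hg.
Qed.

Lemma qmap_mulC G mul one inv A (hG : @is_group G mul one inv) (hA : normal_subgroup mul one inv A) g g' h h' :
  qmap mul inv A g = qmap mul inv A g' -> qmap mul inv A h = qmap mul inv A h' ->
  qmap mul inv A (mul g h) = qmap mul inv A (mul g' h').
Proof.
  move=> /(qmap_eq_inv hG hA) e1 /(qmap_eq_inv hG hA) e2. apply (qmap_eq hG hA).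
  have -> : mul (inv (mul g h)) (mul g' h') =
            mul (mul (mul (inv h) (mul (inv g) g')) (inv (inv h))) (mul (inv h) h').
  { rewrite (g_invK hG) (g_invM hG) -!(g_assoc hG) (g_Kr hG). done. }
  apply (n_mul hA) => //. exact: (n_conj hA).
Qed.

Lemma qmapA G mul one inv A (hG : @is_group G mul one inv) (hA : normal_subgroup mul one inv A) a :
  A a -> qmap mul inv A a = qmap mul inv A one.
Proof. move=> ha. apply (qmap_eq hG hA). rewrite (g_1r hG). exact: (n_inv hA). Qed.

Lemma chi_one G mul one inv A (hG : @is_group G mul one inv) chi :
  @HomQS1 G mul inv A chi -> chi (qmap mul inv A one) = CC1.
Proof.
  move=> [hu hm]. have := hm one one. rewrite (g_1l hG) => e.
  apply (Cmul_cancel (u := chi (qmap mul inv A one))). exact: unitC_ne0.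
  by rewrite Cmul1 -e.
Qed.

Lemma chi_A G mul one inv A (hG : @is_group G mul one inv) (hA : normal_subgroup mul one inv A) chi a :
  @HomQS1 G mul inv A chi -> A a -> chi (qmap mul inv A a) = CC1.
Proof. move=> hc ha. rewrite (qmapA hG hA ha). exact: chi_one. Qed.

Fixpoint gpow G (mul : G -> G -> G) (one : G) (g : G) (k : nat) : G :=
  match k with O => one | S k => mul g (gpow mul one g k) end.
Fixpoint Cpow (z : CC) (k : nat) : CC :=
  match k with O => CC1 | S k => Cmul z (Cpow z k) end.

Lemma gpow_add G mul one inv (hG : @is_group G mul one inv) g i j :
  gpow mul one g (i + j) = mul (gpow mul one g i) (gpow mul one g j).
Proof. elim: i => [|i IH] /=; first by rewrite (g_1l hG). by rewrite IH (g_assoc hG). Qed.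

Lemma chi_pow G mul one inv A (hG : @is_group G mul one inv) chi g k :
  @HomQS1 G mul inv A chi -> chi (qmap mul inv A (gpow mul one g k)) = Cpow (chi (qmap mul inv A g)) k.
Proof.
  move=> hc. elim: k => [|k IH] /=; first exact: chi_one.
  by case: hc => _ hm; rewrite hm IH.
Qed.

Lemma unitC_pow z k : unitC z -> unitC (Cpow z k).
Proof. move=> h; elim: k => [|k IH] /=; [exact unitC1| exact: unitCM]. Qed.

(* pigeonhole: every element has a power in A *)
Lemma pow_in_A G mul one inv A (hG : @is_group G mul one inv) (hA : normal_subgroup mul one inv A)
  (reps : list G) : (forall g, exists r, In r reps /\ A (mul (inv r) g)) ->
  forall g, exists d, (1 <= d)%coq_nat /\ (d <= length reps)%coq_nat /\ A (gpow mul one g d).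
Proof.
  move=> hr g.
  have [p hp] := choice_fun (fun k => hr (gpow mul one g k)).
  set l := List.map p (List.seq 0 (S (length reps))).
  have hnd : ~ NoDup l.
  { move=> hnd. have := NoDup_incl_length hnd (l' := reps).
    rewrite /l List.length_map List.length_seq => h. suff : (S (length reps) <= length reps)%coq_nat by lia.
    apply h => x /in_map_iff [k [<- _]]. exact: (proj1 (hp k)). }
  have [i [j [hi [hj [hij e]]]]] : exists i j, (i < length l)%coq_nat /\ (j < length l)%coq_nat /\ i <> j /\ List.nth i l one = List.nth j l one.
  { apply NNPP => hn; apply hnd. apply (proj2 (NoDup_nth l one)) => i j hi hj e.
    apply NNPP => hij; apply hn; exists i, j; auto. }
  have hlen : length l = S (length reps) by rewrite /l List.length_map List.length_seq.
  rewrite hlen in hi hj.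
  have hn : forall k, (k < S (length reps))%coq_nat -> List.nth k l one = p k.
  { move=> k hk. rewrite /l.
    rewrite (@List.nth_indep _ _ k one (p 0%nat)); last by rewrite List.length_map List.length_seq.
    rewrite List.map_nth List.seq_nth //. }
  rewrite !hn // in e.
  wlog hlt : i j hi hj hij e / (i < j)%coq_nat.
  { move=> W. case: (Nat.lt_total i j) => [h|[h|h]]; first exact: (W i j hi hj hij e h).
    - by [].
    - exact: (W j i hj hi (fun e' => hij (esym e')) (esym e) h). }
  exists (j - i)%coq_nat; split; [lia|split;[lia|]].
  have := proj2 (hp i). have := proj2 (hp j). rewrite e => hA1 hA2.
  have hAA := n_mul hA (n_inv hA hA2) hA1.
  rewrite (g_invM hG) (g_invK hG) -(g_assoc hG) (g_Kr hG) in hAA.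
  have ej : j = Nat.add i (Nat.sub j i) by (clear -hlt; lia).
  rewrite ej (gpow_add hG) (g_Kl hG) in hAA. exact hAA.
Qed.

Definition cis (t : R) : CC := mkC (cos t) (sin t).

Lemma polar w : unitC w -> exists t, 0 <= t <= 2 * PI /\ w = cis t.
Proof.
  destruct w as [a b]; rewrite /unitC /Cnorm2 /= => h.
  have ha : -1 <= a <= 1.
  { have := sq_ge0 b. split; nra. }
  have hs : sqrt (1 - Rsqr a) = Rabs b.
  { rewrite -sqrt_Rsqr_abs. f_equal. rewrite /Rsqr; lra. }
  have hb := acos_bound a. have PIpos := PI_RGT_0.
  case: (Rle_lt_dec 0 b) => hb0.
  - exists (acos a); split; first lra.
    rewrite /cis cos_acos // sin_acos // hs Rabs_right //; lra.
  - exists (2 * PI - acos a); split; first lra.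
    rewrite /cis cos_minus sin_minus cos_2PI sin_2PI cos_acos // sin_acos // hs Rabs_left //.
    apply CC_ext => /=; ring.
Qed.

Lemma Cpow_cis t k : Cpow (cis t) k = cis (INR k * t).
Proof.
  elim: k => [|k IH].
  - rewrite /= /cis Rmult_0_l cos_0 sin_0; reflexivity.
  - rewrite S_INR. change (Cpow (cis t) k.+1) with (Cmul (cis t) (Cpow (cis t) k)). rewrite IH /cis. apply CC_ext => /=.
    + rewrite (Rmult_plus_distr_r) Rmult_1_l cos_plus. ring.
    + rewrite (Rmult_plus_distr_r) Rmult_1_l sin_plus. ring.
Qed.

Lemma cd2_cis a b : cd2 (cis a) (cis b) = 2 - 2 * cos (a - b).
Proof.
  rewrite /cd2 /cis /= cos_minus.
  have h1 := sin2_cos2 a. have h2 := sin2_cos2 b. rewrite /Rsqr in h1 h2. nra.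
Qed.

Lemma near_k (d : nat) phi : 0 <= phi <= 2 * PI * INR d ->
  exists k, (k <= d)%coq_nat /\ Rabs (phi - 2 * PI * INR k) <= PI.
Proof.
  have PIpos := PI_RGT_0.
  elim: d phi => [|d IH] phi hphi.
  - exists 0%nat; split; first lia. rewrite /= in hphi. have -> : phi = 0 by lra.
    rewrite /= Rmult_0_r Rminus_0_r Rabs_R0; lra.
  - rewrite S_INR in hphi.
    case: (Rle_lt_dec phi (2 * PI * INR d)) => h.
    + have [k [hk hk2]] := IH phi (conj (proj1 hphi) h). exists k; split; auto.
    + case: (Rle_lt_dec phi (2 * PI * INR d + PI)) => h2.
      * exists d; split; first lia. rewrite Rabs_right; lra.
      * exists (S d); split; first lia. rewrite S_INR Rabs_left1; lra.
Qed.

Definition zeta (d k : nat) : CC := cis (2 * PI * INR k / INR d).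
Definition roots (d : nat) : list CC := List.map (zeta d) (List.seq 0 (S d)).

Lemma approx_root w (d : nat) : unitC w -> (1 <= d)%coq_nat ->
  exists z, In z (roots d) /\ cd2 w z <= cd2 (Cpow w d) CC1.
Proof.
  move=> hw hd. have [t [ht ->]] := polar hw.
  have PIpos := PI_RGT_0.
  have hdp : 1 <= INR d by (apply (le_INR 1); auto).
  have [k [hk hk2]] := near_k (phi := INR d * t) (d := d) ltac:(split; nra).
  exists (zeta d k); split.
  { apply in_map_iff; exists k; split => //. apply in_seq. lia. }
  rewrite Cpow_cis /zeta cd2_cis.
  have -> : CC1 = cis 0 by rewrite /cis cos_0 sin_0.
  rewrite cd2_cis Rminus_0_r.
  set u := INR d * t - 2 * PI * INR k.
  have e1 : t - 2 * PI * INR k / INR d = u / INR d by rewrite /u; field; lra.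
  have e2 : INR d * t = u + 2 * INR k * PI by rewrite /u; ring.
  rewrite e1 e2 cos_period.
  suff : cos u <= cos (u / INR d) by lra.
  rewrite -(cos_neg u) -(cos_neg (u / INR d)).
  have cabs : forall x, cos x = cos (Rabs x).
  { move=> x. case: (Rcase_abs x) => hx.
    - rewrite (Rabs_left x hx) cos_neg; reflexivity.
    - rewrite (Rabs_right x hx); reflexivity. }
  rewrite !cos_neg (cabs u) (cabs (u / INR d)).
  have hud : Rabs (u / INR d) <= Rabs u.
  { rewrite /Rdiv Rabs_mult Rabs_inv (Rabs_right (INR d)); last lra.
    have := Rabs_pos u. move=> hp.
    have hi : 0 < / INR d <= 1.
    { split; [apply Rinv_0_lt_compat; lra|]. rewrite -Rinv_1. apply Rinv_le_contravar; lra. }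
    nra. }
  have hu0 := Rabs_pos (u / INR d).
  case: (Req_dec (Rabs (u / INR d)) (Rabs u)) => e; first (rewrite e; lra).
  apply Rlt_le, cos_decreasing_1; try lra. all: fold u in hk2; try lra.
Qed.

Lemma root_exact w (d : nat) : unitC w -> (1 <= d)%coq_nat -> Cpow w d = CC1 -> In w (roots d).
Proof.
  move=> hw hd e. have [z [hz hc]] := approx_root hw hd. rewrite e cd2_refl in hc.
  have := cd2_ge0 w z => h0. have -> : w = z; last done. apply cd2_0; lra.
Qed.

Lemma zeta_unit d k : unitC (zeta d k).
Proof. rewrite /unitC /Cnorm2 /zeta /cis /=. have := sin2_cos2 (2 * PI * INR k / INR d). rewrite /Rsqr; lra. Qed.

Lemma roots_unit d z : In z (roots d) -> unitC z.
Proof. move=> /in_map_iff [k [<- _]]; apply zeta_unit. Qed.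

Lemma mult_one G mul one inv (hG : @is_group G mul one inv) (c : G -> CC) :
  (forall g, unitC (c g)) -> (forall g h, c (mul g h) = Cmul (c g) (c h)) -> c one = CC1.
Proof.
  move=> hu hm. have := hm one one. rewrite (g_1l hG) => e.
  apply (Cmul_cancel (u := c one)); first exact: unitC_ne0. by rewrite Cmul1 -e.
Qed.

Lemma mult_pow G mul one inv (hG : @is_group G mul one inv) (c : G -> CC) :
  (forall g, unitC (c g)) -> (forall g h, c (mul g h) = Cmul (c g) (c h)) ->
  forall g k, c (gpow mul one g k) = Cpow (c g) k.
Proof.
  move=> hu hm g. elim => [|k IH] /=; first exact: (mult_one hG).
  by rewrite hm IH.
Qed.

Lemma ratio G mul one inv A n psi (hG : @is_group G mul one inv) (hn : (0 < n)%N) (rho sigma : G -> Mat n) :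
  @HomA_psi G mul inv A n psi rho -> @HomA_psi G mul inv A n psi sigma ->
  exists c : G -> CC, (forall g, unitC (c g)) /\ (forall g h, c (mul g h) = Cmul (c g) (c h)) /\
    forall g, sigma g = scal (c g) (rho g).
Proof.
  move=> [hu1 [hm1 [_ hp1]]] [hu2 [hm2 [_ hp2]]].
  have hex : forall g, exists z, unitC z /\ sigma g = scal z (rho g).
  { move=> g. have := pclass_self (sigma g). rewrite -(hp2 g) (hp1 g). done. }
  have [c hc] := choice_fun hex.
  exists c; split; [move=> g; exact: proj1 (hc g)|split; [|move=> g; exact: proj2 (hc g)]].
  move=> g h. apply (scal_inj (U := rho (mul g h))) => //.
  rewrite -(proj2 (hc (mul g h))) hm2 (proj2 (hc g)) (proj2 (hc h)) mmul_scal hm1 //.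
Qed.

Lemma act_X G mul one inv A n psi (hG : @is_group G mul one inv) (hA : normal_subgroup mul one inv A) chi rho :
  @HomQS1 G mul inv A chi -> @HomA_psi G mul inv A n psi rho -> HomA_psi psi (act chi rho).
Proof.
  move=> [hcu hcm] [hu [hm [hs hp]]]. rewrite /act. split; [|split; [|split]].
  - move=> g; apply unitary_scal; auto.
  - move=> g h. by rewrite hcm hm mmul_scal.
  - move=> a ha. have [z [hz ->]] := hs a ha. exists (Cmul (chi (qmap mul inv A a)) z); split.
    + exact: unitCM. + exact: scalarm_scal.
  - move=> g. rewrite pclass_scal //.
Qed.

Lemma act_free G mul inv A n psi (hn : (0 < n)%N) (chi : Quo mul inv A -> CC) rho :
  @HomA_psi G mul inv A n psi rho -> act chi rho = rho -> chi = (fun _ => CC1).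
Proof.
  move=> [hu _] e. apply functional_extensionality => q. have [g ->] := qmap_surj q.
  have := f_equal (fun f => f g) e. rewrite /act => e2.
  apply (scal_inj hn (hu g)). by rewrite e2 scal1.
Qed.

Lemma act_comp G mul inv A n chi1 chi2 (rho : G -> Mat n) :
  @act G mul inv A n chi2 (act chi1 rho) = act (fun q => Cmul (chi2 q) (chi1 q)) rho.
Proof.
  apply functional_extensionality => g. by rewrite /act scal_scal.
Qed.

Lemma act_one G mul inv A n (rho : G -> Mat n) : @act G mul inv A n (fun _ => CC1) rho = rho.
Proof. apply functional_extensionality => g. by rewrite /act scal1. Qed.

Lemma H_one G mul one inv A (hG : @is_group G mul one inv) : @HomQS1 G mul inv A (fun _ => CC1).
Proof. split; [move=> _; exact unitC1| move=> g h; by rewrite Cmul1]. Qed.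

Lemma H_mul G mul inv A chi1 chi2 : @HomQS1 G mul inv A chi1 -> @HomQS1 G mul inv A chi2 ->
  HomQS1 (fun q => Cmul (chi2 q) (chi1 q)).
Proof.
  move=> [u1 m1] [u2 m2]; split; first by move=> q; apply unitCM.
  move=> g h. rewrite m1 m2. apply CC_ext; simpl; ring.
Qed.

Lemma H_conj G mul inv A chi : @HomQS1 G mul inv A chi -> HomQS1 (fun q => Cconj (chi q)).
Proof.
  move=> [u1 m1]; split; first by move=> q; apply unitC_conj.
  move=> g h. by rewrite m1 CconjM.
Qed.

Lemma act_conjK G mul inv A n chi (rho : G -> Mat n) : @HomQS1 G mul inv A chi ->
  act (fun q => Cconj (chi q)) (act chi rho) = rho.
Proof.
  move=> [u _]. rewrite act_comp.
  have -> : (fun q => Cmul (Cconj (chi q)) (chi q)) = (fun _ => CC1).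
  { apply functional_extensionality => q. exact: unit_conj_mul. }
  exact: act_one.
Qed.

Lemma act_Kconj G mul inv A n chi (rho : G -> Mat n) : @HomQS1 G mul inv A chi ->
  act chi (act (fun q => Cconj (chi q)) rho) = rho.
Proof.
  move=> [u _]. rewrite act_comp.
  have -> : (fun q => Cmul (chi q) (Cconj (chi q))) = (fun _ => CC1).
  { apply functional_extensionality => q. exact: unit_mul_conj. }
  exact: act_one.
Qed.

Lemma R_act G mul one inv A n (hG : @is_group G mul one inv) (hA : normal_subgroup mul one inv A)
  (hn : (0 < n)%N) chi (rho : G -> Mat n) :
  @HomQS1 G mul inv A chi -> @restr G A n hn (act chi rho) = @restr G A n hn rho.
Proof.
  move=> hc. apply functional_extensionality => [[a ha]]. rewrite /restr /act /scal /=.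
  by rewrite (chi_A hG hA hc ha) Cmul1.
Qed.

Lemma IO G mul one inv A n psi (hG : @is_group G mul one inv) (hA : normal_subgroup mul one inv A)
  (hn : (0 < n)%N) (rho sigma : G -> Mat n) :
  @HomA_psi G mul inv A n psi rho -> @HomA_psi G mul inv A n psi sigma -> @restr G A n hn rho = @restr G A n hn sigma ->
  exists chi, @HomQS1 G mul inv A chi /\ sigma = act chi rho.
Proof.
  move=> hr hs e. have [c [cu [cm cs]]] := ratio hG hn hr hs.
  have cA : forall a, A a -> c a = CC1.
  { move=> a ha. have [z [hz ez]] := (proj1 (proj2 (proj2 hr))) a ha.
    have := f_equal (fun f => f (exist _ a ha)) e. rewrite /restr /= cs ez.
    rewrite /scal scalarm_entry => e2. symmetry. apply (Cmul_cancel (u := z)); first exact: unitC_ne0.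
    by rewrite Cmul1. }
  have ceq : forall g g', qmap mul inv A g = qmap mul inv A g' -> c g = c g'.
  { move=> g g' /(qmap_eq_inv hG hA) hgg. rewrite -[in RHS](g_Kr hG g g') cm (cA _ hgg) Cmul1r //. }
  have [rep hrep] := choice_fun (@qmap_surj G mul inv A).
  exists (fun q => c (rep q)).
  have chq : forall g, c (rep (qmap mul inv A g)) = c g.
  { move=> g. apply ceq. by rewrite -hrep. }
  split.
  - split; first by move=> q; apply cu. move=> g h. by rewrite !chq cm.
  - apply functional_extensionality => g. by rewrite /act chq cs.
Qed.

Lemma fmin (I : Type) (l : list I) (P : I -> R -> Prop) :
  (forall i e e', P i e -> 0 < e' -> e' <= e -> P i e') ->
  (forall i, In i l -> exists e, 0 < e /\ P i e) -> exists e, 0 < e /\ forall i, In i l -> P i e.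
Proof.
  move=> hm. elim: l => [|x l IH] h.
  - exists 1; split; [lra|done].
  - have [e1 [he1 hp1]] := h x (or_introl erefl).
    have [e2 [he2 hp2]] := IH (fun i hi => h i (or_intror hi)).
    exists (Rmin e1 e2); split; first by apply Rmin_pos.
    have hpos : 0 < Rmin e1 e2 by apply Rmin_pos.
    move=> i [<-|hi].
    - exact: (hm x e1 (Rmin e1 e2) hp1 hpos (Rmin_l _ _)).
    - exact: (hm i e2 (Rmin e1 e2) (hp2 i hi) hpos (Rmin_r _ _)).
Qed.

Lemma abs_lt_sq x e : 0 < e -> x * x < e * e -> Rabs x < e.
Proof.
  move=> he h. case: (Rcase_abs x) => hx; [rewrite Rabs_left //|rewrite Rabs_right //]; nra.
Qed.

Lemma Ctopo_ball O z : Ctopo O -> O z -> exists e, 0 < e /\ forall w, cd2 z w < e -> O w.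
Proof.
  move=> hO hz. have [e [he hb]] := hO z hz. exists (e * e); split; first nra.
  move=> w hw. rewrite /cd2 in hw. have h1 := sq_ge0 (re z - re w). have h2 := sq_ge0 (im z - im w).
  apply hb; apply abs_lt_sq => //; nra.
Qed.

Lemma Ctopo_disc z e : Ctopo (fun w => cd2 z w < e).
Proof.
  move=> w hw. set D := e - cd2 z w.
  have hD : 0 < D by rewrite /D; lra.
  have ha := Rabs_pos (re w - re z). have hb := Rabs_pos (im w - im z).
  set a := Rabs (re w - re z) in ha *. set b := Rabs (im w - im z) in hb *.
  set r := Rmin 1 (D / (2 * (a + b) + 4)).
  have hr : 0 < r by apply Rmin_pos; [lra| apply Rmult_lt_0_compat; [lra|apply Rinv_0_lt_compat; lra]].
  have hr1 : r <= 1 by apply Rmin_l.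
  have hr2 : r * (2 * (a + b) + 4) <= D.
  { have : r <= D / (2 * (a + b) + 4) by apply Rmin_r.
    move=> h. apply (Rmult_le_compat_r (2 * (a + b) + 4)) in h; last lra.
    rewrite /Rdiv Rmult_assoc Rinv_l in h; lra. }
  exists r; split => // v h1 h2.
  rewrite /cd2.
  have e1 : re z - re v = (re z - re w) + (re w - re v) by ring.
  have e2 : im z - im v = (im z - im w) + (im w - im v) by ring.
  rewrite e1 e2.
  set p := re w - re v. set q := im w - im v.
  have hp : Rabs p < r by rewrite /p Rabs_minus_sym.
  have hq : Rabs q < r by rewrite /q Rabs_minus_sym.
  have hw' : (re z - re w) * (re z - re w) + (im z - im w) * (im z - im w) = cd2 z w by [].
  have k1 : (re z - re w) * p <= a * r.
  { apply (Rle_trans _ (Rabs ((re z - re w) * p))); [apply Rle_abs|].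
    rewrite Rabs_mult /a Rabs_minus_sym. apply Rmult_le_compat_l; [apply Rabs_pos|lra]. }
  have k2 : (im z - im w) * q <= b * r.
  { apply (Rle_trans _ (Rabs ((im z - im w) * q))); [apply Rle_abs|].
    rewrite Rabs_mult /b Rabs_minus_sym. apply Rmult_le_compat_l; [apply Rabs_pos|lra]. }
  have k3 : p * p <= r * r.
  { apply Rle_trans with (Rabs (p * p)); [apply Rle_abs|]. rewrite Rabs_mult. have := Rabs_pos p. nra. }
  have k4 : q * q <= r * r.
  { apply Rle_trans with (Rabs (q * q)); [apply Rle_abs|]. rewrite Rabs_mult. have := Rabs_pos q. nra. }
  have hrr : r * r <= r by nra.
  have eD : D = e - cd2 z w by [].
  have key : (re z - re w + p) * (re z - re w + p) + (im z - im w + q) * (im z - im w + q)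
    = cd2 z w + 2 * ((re z - re w) * p) + 2 * ((im z - im w) * q) + p * p + q * q by (rewrite /cd2; ring).
  rewrite key. clear -k1 k2 k3 k4 hrr eD hr2 hr. lra.
Qed.

Lemma Ctopo_full : Ctopo (fun _ => True).
Proof. move=> z _. exists 1; split; [lra|done]. Qed.

Lemma ptopo_full I Y (tY : topo Y) : tY (fun _ => True) -> ptopo (I := I) tY (fun _ => True).
Proof. move=> h f _. exists nil, (fun _ _ => True); split; [done|split; done]. Qed.

Lemma ptopo_ball I Y (tY : topo Y) (Bc : Y -> Y -> R -> Prop) :
  (forall y y' e e', Bc y y' e -> e <= e' -> Bc y y' e') ->
  (forall O y, tY O -> O y -> exists e, 0 < e /\ forall y', Bc y y' e -> O y') ->
  forall O (f : I -> Y), ptopo tY O -> O f ->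
  exists (l : list I) e, 0 < e /\ forall h, (forall i, In i l -> Bc (f i) (h i) e) -> O h.
Proof.
  move=> hm hb O f hO hf. have [l [V [hV [hfV hsub]]]] := hO f hf.
  have [e [he hP]] := fmin (l := l) (P := fun i e => forall y', Bc (f i) y' e -> V i y')
     (fun i e e' h he' hle y' hy => h y' (hm _ _ _ _ hy hle))
     (fun i _ => hb (V i) (f i) (hV i) (hfV i)).
  - exists l, e; split => // h hh. apply hsub => i hi. apply (hP i hi). auto.
Qed.

Lemma ptopo_box I Y (tY : topo Y) (Bc : Y -> Y -> R -> Prop) :
  (forall y e, tY (fun y' => Bc y y' e)) -> tY (fun _ => True) ->
  forall (f : I -> Y) (l : list I) e, ptopo tY (fun h => forall i, In i l -> Bc (f i) (h i) e).
Proof.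
  move=> hopen hfull f l e h hh.
  exists l, (fun i y => In i l -> Bc (f i) y e); split; [|split].
  - move=> i. case: (classic (In i l)) => hi.
    + have -> : (fun y => In i l -> Bc (f i) y e) = (fun y => Bc (f i) y e); last by apply hopen.
      apply functional_extensionality => y; apply propositional_extensionality; tauto.
    + have -> : (fun y => In i l -> Bc (f i) y e) = (fun _ => True); last by [].
      apply functional_extensionality => y; apply propositional_extensionality; tauto.
  - exact hh.
  - intros k hk i0 hi0; exact (hk i0 hi0 hi0).
Qed.

Lemma ptopo_local I Y (tY : topo Y) (O : (I -> Y) -> Prop) :
  (forall f, O f -> exists B, ptopo tY B /\ B f /\ forall h, B h -> O h) -> ptopo tY O.
Proof.
  move=> h f hf. have [B [hB [hBf hsub]]] := h f hf.
  have [l [V [hV [hfV hs]]]] := hB f hBf. exists l, V; split => //; split => //.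
  move=> k hk; apply hsub, hs, hk.
Qed.

Definition Brow n (u v : 'I_n -> CC) e := forall j, cd2 (u j) (v j) < e.
Definition BM n (U V : Mat n) e := forall i j, cd2 (U i j) (V i j) < e.

Lemma row_ball n O (u : 'I_n -> CC) : ptopo Ctopo O -> O u -> exists e, 0 < e /\ forall v, Brow u v e -> O v.
Proof.
  move=> hO hu.
  have [l [e [he hs]]] := ptopo_ball (Bc := fun z w e => cd2 z w < e)
     (fun y y' e e' h hle => Rlt_le_trans _ _ _ h hle) Ctopo_ball hO hu.
  exists e; split => // v hv. apply hs => i _; apply hv.
Qed.

Lemma row_open n (u : 'I_n -> CC) e : ptopo Ctopo (fun v => Brow u v e).
Proof.
  have -> : (fun v => Brow u v e) = (fun v => forall j, In j (enum 'I_n) -> cd2 (u j) (v j) < e).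
  { apply functional_extensionality => v; apply propositional_extensionality; split.
    - move=> h j _; apply h.
    - move=> h j; apply h, In_enum. }
  apply (ptopo_box (Bc := fun z w e => cd2 z w < e)); [move=> y e'; apply Ctopo_disc| apply Ctopo_full].
Qed.

Lemma M_ball n O (U : Mat n) : Mtopo O -> O U -> exists e, 0 < e /\ forall V, BM U V e -> O V.
Proof.
  move=> hO hU.
  have [l [e [he hs]]] := ptopo_ball (Bc := fun u v e => Brow u v e)
     (fun y y' e e' h hle j => Rlt_le_trans _ _ _ (h j) hle) (@row_ball n) hO hU.
  exists e; split => // V hV. apply hs => i _ j; apply hV.
Qed.

Lemma M_open n (U : Mat n) e : Mtopo (fun V => BM U V e).
Proof.
  have -> : (fun V => BM U V e) = (fun V => forall i, In i (enum 'I_n) -> Brow (U i) (V i) e).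
  { apply functional_extensionality => v; apply propositional_extensionality; split.
    - move=> h i _ j; apply h.
    - move=> h i j; apply h, In_enum. }
  apply (ptopo_box (Bc := fun u v e => Brow u v e)); [move=> y e'; apply row_open| apply ptopo_full, Ctopo_full].
Qed.

Lemma M_full n : @Mtopo n (fun _ => True).
Proof. apply ptopo_full, ptopo_full, Ctopo_full. Qed.

Lemma G_ball (G : Type) n O (rho : G -> Mat n) : ptopo (@Mtopo n) O -> O rho ->
  exists (F : list G) e, 0 < e /\ forall rho', (forall g, In g F -> BM (rho g) (rho' g) e) -> O rho'.
Proof.
  move=> hO hr. apply (ptopo_ball (tY := @Mtopo n) (Bc := fun U V e => BM U V e)) => //.
  - move=> y y' e e' h hle i j; exact: Rlt_le_trans (h i j) hle.
  - move=> O' y; apply M_ball.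
Qed.

Lemma G_open (G : Type) n (rho : G -> Mat n) F e :
  ptopo (@Mtopo n) (fun rho' => forall g, In g F -> BM (rho g) (rho' g) e).
Proof. apply (ptopo_box (Bc := fun U V e => BM U V e)); [move=> y e'; apply M_open| apply M_full]. Qed.

Lemma Amb_ball (I : Type) O (f : I -> CC) : ptopo Ctopo O -> O f ->
  exists (L : list I) e, 0 < e /\ forall f', (forall a, In a L -> cd2 (f a) (f' a) < e) -> O f'.
Proof.
  move=> hO hf. apply (ptopo_ball (tY := Ctopo) (Bc := fun z w e => cd2 z w < e)) => //.
  - move=> y y' e e' h hle; exact: Rlt_le_trans h hle.
  - exact: Ctopo_ball.
Qed.

Lemma Amb_open (I : Type) (f : I -> CC) L e :
  ptopo Ctopo (fun f' => forall a, In a L -> cd2 (f a) (f' a) < e).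
Proof. apply (ptopo_box (Bc := fun z w e => cd2 z w < e)); [move=> y e'; apply Ctopo_disc| apply Ctopo_full]. Qed.

Fixpoint allt (Z : list CC) (k : nat) : list (list CC) :=
  match k with O => nil :: nil | S k => flat_map (fun z => List.map (cons z) (allt Z k)) Z end.

Lemma allt_in Z (t : list CC) : (forall x, In x t -> In x Z) -> In t (allt Z (length t)).
Proof.
  elim: t => [|a t IH] h /=; first by left.
  apply in_flat_map. exists a; split; first by apply h; left.
  apply in_map. apply IH => x hx; apply h; right; exact hx.
Qed.

Definition sel (G : Type) (A : G -> Prop) (g : G) : list {a | A a} :=
  match excluded_middle_informative (A g) with
  | left p => exist _ g p :: nil
  | right _ => nil
  end.

Lemma sel_in (G : Type) (A : G -> Prop) (l : list G) g (p : A g) :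
  In g l -> In (exist _ g p) (flat_map (sel A) l).
Proof.
  move=> hg. apply in_flat_map. exists g; split => //. rewrite /sel.
  case: (excluded_middle_informative (A g)) => [p'|np]; last by [].
  left. apply sig_eq. done.
Qed.

Lemma sep (Zs : list CC) : exists s, 0 < s /\ forall u, In u Zs -> u <> CC1 -> s <= cd2 u CC1.
Proof.
  apply (fmin (P := fun u e => u <> CC1 -> e <= cd2 u CC1)).
  - move=> i e e' h _ hle hne. have := h hne. lra.
  - move=> u _. case: (classic (u = CC1)) => e.
    + exists 1; split; [lra|done].
    + exists (cd2 u CC1); split; last by move=> _; lra.
      have := cd2_ge0 u CC1. case: (Req_dec (cd2 u CC1) 0) => h0; last by lra.
      by have := cd2_0 h0.
Qed.

Theorem mainTheorem19
  (G : Type) (mul : G -> G -> G) (one : G) (inv : G -> G)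
  (hG : is_group mul one inv) (hfg : fin_generated mul one inv)
  (A : G -> Prop) (hA : normal_subgroup mul one inv A) (hfin : finite_index mul inv A)
  (n : nat) (hn : (0 < n)%N)
  (psi : Quo mul inv A -> PU n) (hpsi : proj_hom psi) :
  let X := HomA_psi psi in
  let H := @HomQS1 G mul inv A in
  let R := @restr G A n hn in
  let tX := sub_topo (ptopo (@Mtopo n)) X in
  let tAmb := ptopo (I := {a : G | A a}) Ctopo in
  let E := fun x y : {rho | X rho} =>
             exists chi, H chi /\ proj1_sig y = act chi (proj1_sig x) in
  let Im := fun f => exists x : {rho | X rho}, f = R (proj1_sig x) in
  (* Hom(Q,S^1) is finite *)
  (exists l : list (Quo mul inv A -> CC), forall chi, H chi -> In chi l) /\
  (* it acts on Hom_A(Gamma,U(n))_psi, and freely *)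
  (forall chi rho, H chi -> X rho ->
     X (act chi rho) /\ (act chi rho = rho -> chi = (fun _ => CC1))) /\
  (* R induces a homeomorphism from the orbit space onto R(Hom_A(Gamma,U(n))_psi) *)
  (exists h : Quot E -> {f | Im f},
     homeomorphism (quot_topo tX E) (sub_topo tAmb Im) h /\
     forall x, proj1_sig (h (qproj E x)) = R (proj1_sig x)) /\
  (* in particular R is a finite covering onto its image with structure group
     Hom(Q,S^1): every point has an open W whose translates chi.W are the
     disjoint sheets over the open set R(W), each mapped homeomorphically *)
  (forall rho0, X rho0 -> exists W : (G -> Mat n) -> Prop,
     W rho0 /\ relopen (ptopo (@Mtopo n)) X W /\ relopen tAmb Im (img R W) /\
     (forall chi, H chi ->
        relopen (ptopo (@Mtopo n)) X (img (act chi) W) /\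
        homeo_on (ptopo (@Mtopo n)) tAmb (img (act chi) W) (img R W) R) /\
     (forall chi rho, H chi -> W rho -> W (act chi rho) -> chi = (fun _ => CC1)) /\
     (forall rho, X rho -> (img R W (R rho) <-> exists chi, H chi /\ img (act chi) W rho))).
Proof.
  move=> X H R tX tAmb E Im.
  have [reps hreps] := hfin.
  set m := length reps.
  have hpow := pow_in_A hG hA hreps.
  have [dr hdr] := choice_fun hpow.
  have hri : forall q : Quo mul inv A, exists r, In r reps /\ q = qmap mul inv A r.
  { move=> q. have [g ->] := qmap_surj q. have [r [hr hrg]] := hreps g. exists r; split => //.
    symmetry. exact (qmap_eq hG hA hrg). }
  have [ri hri'] := choice_fun hri.
  set Z := flat_map roots (List.seq 1 m).
  have Zunit : forall z, In z Z -> unitC z.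
  { move=> z /in_flat_map [d [_ hz]]. exact: roots_unit hz. }
  have chiZ : forall chi g, H chi -> In (chi (qmap mul inv A g)) Z.
  { move=> chi g hc. have [hd1 [hd2 hdA]] := hdr g. apply in_flat_map. exists (dr g); split.
    - apply in_seq. rewrite /m. lia.
    - apply root_exact; [exact (proj1 hc (qmap mul inv A g)) | exact hd1 | ].
      rewrite -(chi_pow hG g (dr g) hc). exact (chi_A hG hA hc hdA). }
  have part1 : exists l, forall chi, H chi -> In chi l.
  { have hidx : forall q : Quo mul inv A, exists i, (i < m)%coq_nat /\ q = qmap mul inv A (List.nth i reps one).
    { move=> q. have [hin hq] := hri' q. have [i [hi e]] := In_nth reps (ri q) one hin.
      exists i; split => //. by rewrite e. }
    have [idx hidx'] := choice_fun hidx.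
    exists (List.map (fun t => fun q => List.nth (idx q) t CC0) (allt Z m)).
    move=> chi hc. apply in_map_iff. exists (List.map (fun r => chi (qmap mul inv A r)) reps). split.
    - apply functional_extensionality => q. have [hi hq] := hidx' q.
      rewrite (List.nth_indep _ _ (chi (qmap mul inv A one))); last by rewrite List.length_map.
      rewrite (List.map_nth (fun r => chi (qmap mul inv A r))) -hq //.
    - have := allt_in (Z := Z) (t := List.map (fun r => chi (qmap mul inv A r)) reps).
      rewrite List.length_map. apply. move=> x /in_map_iff [r [<- _]]. exact: chiZ. }
  have part2 : forall chi rho, H chi -> X rho ->
     X (act chi rho) /\ (act chi rho = rho -> chi = (fun _ => CC1)).
  { move=> chi rho hc hx; split; [exact (act_X hG hA hc hx)| exact (act_free hn hx)]. }
  have hRact : forall chi rho, H chi -> R (act chi rho) = R rho.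
  { move=> chi rho hc. exact (R_act hG hA hn rho hc). }
  have hIO : forall rho sigma, X rho -> X sigma -> R rho = R sigma -> exists chi, H chi /\ sigma = act chi rho.
  { move=> rho sigma hr hs e. exact (IO hG hA hr hs e). }
  have Rcont : forall O, tAmb O -> ptopo (@Mtopo n) (fun rho => O (R rho)).
  { move=> O hO. apply ptopo_local => rho hOr.
    have [L [e [he hL]]] := Amb_ball hO hOr.
    exists (fun rho' => forall g, In g (List.map (@proj1_sig _ _) L) -> BM (rho g) (rho' g) e).
    split; [apply G_open|split].
    - move=> g _ i j. rewrite cd2_refl. lra.
    - move=> rho' hb. apply hL => a ha. exact (hb (proj1_sig a) (in_map _ _ _ ha) (Ordinal hn) (Ordinal hn)). }
  have actcont : forall chi (O : (G -> Mat n) -> Prop), H chi -> ptopo (@Mtopo n) O -> ptopo (@Mtopo n) (fun rho => O (act chi rho)).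
  { move=> chi O hc hO. apply ptopo_local => rho hr.
    have [F [e [he hF]]] := G_ball hO hr.
    exists (fun rho' => forall g, In g F -> BM (act chi rho g) (act chi rho' g) e). split.
    - have -> : (fun rho' => forall g, In g F -> BM (act chi rho g) (act chi rho' g) e) =
                (fun rho' => forall g, In g F -> BM (rho g) (rho' g) e).
      { apply functional_extensionality => rho'; apply propositional_extensionality.
        split => h g hg i j; have := h g hg i j; rewrite /act /scal cd2_unit //; exact (proj1 hc _). }
      apply G_open.
    - split; first by move=> g _ i j; rewrite cd2_refl; lra.
      move=> rho' hb. apply hF => g hg. exact (hb g hg). }
  have Ginter : forall O1 O2 : (G -> Mat n) -> Prop, ptopo (@Mtopo n) O1 -> ptopo (@Mtopo n) O2 -> ptopo (@Mtopo n) (fun rho => O1 rho /\ O2 rho).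
  { move=> O1 O2 h1 h2. apply ptopo_local => rho [r1 r2].
    have [F1 [e1 [he1 hF1]]] := G_ball h1 r1. have [F2 [e2 [he2 hF2]]] := G_ball h2 r2.
    exists (fun rho' => forall g, In g (F1 ++ F2) -> BM (rho g) (rho' g) (Rmin e1 e2)). split; [apply G_open|split].
    - move=> g _ i j; rewrite cd2_refl; apply Rmin_pos; lra.
    - move=> rho' hb; split.
      + apply hF1 => g hg i j. apply (Rlt_le_trans _ _ _ (hb g (in_or_app _ _ _ (or_introl hg)) i j)). apply Rmin_l.
      + apply hF2 => g hg i j. apply (Rlt_le_trans _ _ _ (hb g (in_or_app _ _ _ (or_intror hg)) i j)). apply Rmin_r. }
  set Zs := flat_map (fun a => flat_map (fun b => List.map (fun c => Cmul (Cmul a b) (Cconj c)) Z) Z) Z.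
  have [s [hs hsep]] := sep Zs.
  have riq : forall g, In (ri (qmap mul inv A g)) reps /\ A (mul (inv (ri (qmap mul inv A g))) g).
  { move=> g. have [h1 h2] := hri' (qmap mul inv A g). split => //. apply (qmap_eq_inv hG hA). by rewrite -h2. }
  have KL : forall rho0, X rho0 -> forall (F : list G) e, 0 < e ->
     exists (L : list {a | A a}) d, 0 < d /\ forall rho, X rho ->
       (forall a, In a L -> cd2 (R rho0 a) (R rho a) < d) ->
       exists chi, H chi /\ forall g, In g F -> BM (rho0 g) (act chi rho g) e.
  { move=> rho0 hx0 F e he.
    set trip := flat_map (fun r1 => flat_map (fun r2 => List.map (fun r3 => mul (inv r3) (mul r1 r2)) reps) reps) reps.
    set Lg := List.map (fun r => gpow mul one r (dr r)) reps ++ trip ++ List.map (fun g => mul (inv (ri (qmap mul inv A g))) g) F.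
    exists (flat_map (sel A) Lg), (Rmin (e / 4) (s / 16)).
    have hd : 0 < Rmin (e/4) (s/16) by apply Rmin_pos; lra.
    split => // rho hx hclose.
    set d := Rmin (e/4) (s/16) in hd hclose.
    have hd1 : d <= e / 4 by apply Rmin_l.
    have hd2 : d <= s/16 by apply Rmin_r.
    have [c [cu [cm cs]]] := ratio hG hn hx0 hx.
    have cA : forall a, A a -> In a Lg -> cd2 (c a) CC1 < d.
    { move=> a ha hin. have := hclose _ (sel_in ha hin).
      have [z [hz ez]] := proj1 (proj2 (proj2 hx0)) a ha.
      rewrite /R /restr /= cs ez /scal scalarm_entry.
      rewrite -{1}(Cmul1 z) cd2_unitr // cd2_sym; exact id. }
    have cpow := mult_pow hG cu cm.
    have hz : forall r, exists z, In r reps -> In z Z /\ cd2 (c r) z < d.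
    { move=> r. case: (classic (In r reps)) => hr; last by exists CC0.
      have [hd1' [hd2' hdA]] := hdr r.
      have [z [hzr hzc]] := approx_root (cu r) hd1'.
      exists z => _; split.
      - apply in_flat_map; exists (dr r); split; [apply in_seq; rewrite /m; lia| exact hzr].
      - eapply Rle_lt_trans; first exact hzc. rewrite -cpow. apply cA => //.
        apply in_or_app; left. exact (in_map (fun r => gpow mul one r (dr r)) _ _ hr). }
    have [zt hzt] := choice_fun hz.
    have zu : forall r, In r reps -> unitC (zt r).
    { move=> r hr; apply Zunit, (proj1 (hzt r hr)). }
    exists (fun q => Cconj (zt (ri q))); split.
    - split; first by move=> q; apply unitC_conj, zu, (proj1 (hri' q)).
      move=> g h. rewrite -CconjM. f_equal.
      have [h1 a1] := riq g. have [h2 a2] := riq h. have [h3 a3] := riq (mul g h).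
      set r1 := ri (qmap mul inv A g) in h1 a1 *. set r2 := ri (qmap mul inv A h) in h2 a2 *.
      set r3 := ri (qmap mul inv A (mul g h)) in h3 a3 *.
      have e12 : qmap mul inv A (mul r1 r2) = qmap mul inv A r3.
      { rewrite (qmap_mulC hG hA (g' := g) (h' := h)); [|exact (qmap_eq hG hA a1)| exact (qmap_eq hG hA a2)].
        symmetry; exact (qmap_eq hG hA a3). }
      have hbA : A (mul (inv r3) (mul r1 r2)) := qmap_eq_inv hG hA (esym e12).
      set b := mul (inv r3) (mul r1 r2) in hbA.
      have hbL : In b Lg.
      { apply in_or_app; right; apply in_or_app; left. rewrite /trip. apply in_flat_map; exists r1; split => //.
        apply in_flat_map; exists r2; split => //. apply in_map_iff; exists r3; split => //. }
      have cb := cA b hbA hbL.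
      have ec : Cmul (c r1) (c r2) = Cmul (c r3) (c b).
      { rewrite -!cm /b (g_Kr hG). done. }
      have [z1Z z1c] := hzt r1 h1. have [z2Z z2c] := hzt r2 h2. have [z3Z z3c] := hzt r3 h3.
      have uZs : In (Cmul (Cmul (zt r1) (zt r2)) (Cconj (zt r3))) Zs.
      { rewrite /Zs. apply in_flat_map; exists (zt r1); split => //.
        apply in_flat_map; exists (zt r2); split => //. apply in_map_iff; exists (zt r3); split => //. }
      have ucd : cd2 (Cmul (Cmul (zt r1) (zt r2)) (Cconj (zt r3))) CC1 = cd2 (Cmul (zt r1) (zt r2)) (zt r3).
      { rewrite -(unit_mul_conj (zu r3 h3)) cd2_unitr //. apply unitC_conj, zu => //. }
      have bnd : cd2 (Cmul (zt r1) (zt r2)) (zt r3) < s.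
      { have t1 := cd2_tri (Cmul (zt r1) (zt r2)) (Cmul (c r1) (c r2)) (zt r3).
        have t2 := cd2_prod (zt r2) (c r1) (zu r1 h1) (cu r2).
        have t3 := cd2_tri (Cmul (c r3) (c b)) (c r3) (zt r3).
        have t4 : cd2 (Cmul (c r3) (c b)) (c r3) = cd2 (c b) CC1.
        { rewrite -{2}(Cmul1r (c r3)) cd2_unit //. }
        rewrite ec in t1 t2. rewrite cd2_sym in z1c. rewrite cd2_sym in z2c.
        have := cd2_ge0 (c b) CC1. lra. }
      have u1 : Cmul (Cmul (zt r1) (zt r2)) (Cconj (zt r3)) = CC1.
      { apply NNPP => hne. have := hsep _ uZs hne. lra. }
      have := f_equal (fun x => Cmul x (zt r3)) u1.
      rewrite -CmulA unit_conj_mul ?Cmul1r ?Cmul1 //; last exact: zu.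
    - move=> g hg i j.
      have [hr ha] := riq g.
      set r := ri (qmap mul inv A g) in hr ha *.
      have haL : In (mul (inv r) g) Lg.
      { apply in_or_app; right; apply in_or_app; right; apply in_map_iff; exists g; split => //. }
      have ca := cA _ ha haL. have [_ zc] := hzt r hr.
      have eg : c g = Cmul (c r) (c (mul (inv r) g)) by rewrite -cm (g_Kr hG).
      rewrite /act cs scal_scal /scal eg.
      rewrite -{1}(Cmul1 (rho0 g i j)) cd2_mulr.
      have hU := unitary_entry_le1 i j (proj1 hx0 g).
      have hw : cd2 CC1 (Cmul (Cconj (zt r)) (Cmul (c r) (c (mul (inv r) g)))) < e.
      { rewrite cd2_sym -(unit_conj_mul (zu r hr)) cd2_unit; last by apply unitC_conj, zu.
        have t1 := cd2_tri (Cmul (c r) (c (mul (inv r) g))) (c r) (zt r).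
        have t2 : cd2 (Cmul (c r) (c (mul (inv r) g))) (c r) = cd2 (c (mul (inv r) g)) CC1.
        { rewrite -{2}(Cmul1r (c r)) cd2_unit //. }
        lra. }
      have h0 := Cnorm2_ge0 (rho0 g i j). have h1 := cd2_ge0 CC1 (Cmul (Cconj (zt r)) (Cmul (c r) (c (mul (inv r) g)))).
      apply (Rle_lt_trans _ (1 * cd2 CC1 (Cmul (Cconj (zt r)) (Cmul (c r) (c (mul (inv r) g)))))); last lra.
      apply Rmult_le_compat_r; lra. }
  have OR : forall U, relopen (ptopo (@Mtopo n)) X U -> relopen tAmb Im (img R U).
  { move=> U [hUX [O [hO hUO]]]. split.
    - move=> f [rho [hU <-]]. exists (exist _ rho (hUX rho hU)). done.
    - exists (fun f => exists rho0 L d, U rho0 /\ 0 < d /\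
         (forall rho, X rho -> (forall a, In a L -> cd2 (R rho0 a) (R rho a) < d) -> img R U (R rho)) /\
         forall a, In a L -> cd2 (R rho0 a) (f a) < d).
      split.
      + apply ptopo_local => f [rho0 [L [d [hU0 [hd [hP hf]]]]]].
        exists (fun f' => forall a, In a L -> cd2 (R rho0 a) (f' a) < d). split; [apply Amb_open|split; first exact hf].
        move=> f' hf'. exact (ex_intro _ rho0 (ex_intro _ L (ex_intro _ d (conj hU0 (conj hd (conj hP hf')))))). 
      + move=> f [[rho hrho] ->] /=. split.
        * move=> [rho0 [hU0 e0]].
          have hx0 := hUX _ hU0. have [F [e [he hF]]] := G_ball hO ((proj1 (hUO rho0 hx0)) hU0).
          have [L [d [hd hL]]] := KL rho0 hx0 F e he.
          exists rho0, L, d. split => //. split => //. split.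
          -- move=> rho' hx' hc. have [chi [hc' hb]] := hL rho' hx' hc.
             exists (act chi rho'). split; last exact (hRact chi rho' hc').
             apply (proj2 (hUO _ (proj1 (part2 _ _ hc' hx')))). apply hF => g hg. exact (hb g hg).
          -- move=> a _. rewrite e0 cd2_refl. lra.
        * move=> [rho0 [L [d [hU0 [hd [hP hf]]]]]]. exact (hP rho hrho hf). }
  have Eiff : forall x y : {rho | X rho}, E x y <-> R (proj1_sig x) = R (proj1_sig y).
  { move=> [x hx] [y hy] /=. split.
    - move=> [chi [hc e]]. simpl in e. rewrite e. exact (esym (hRact chi x hc)).
    - move=> e. have [chi [hc e2]] := hIO x y hx hy e. exists chi; split; [exact hc| exact e2]. }
  have qproj_eq : forall x y, R (proj1_sig x) = R (proj1_sig y) -> qproj E x = qproj E y.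
  { move=> x y e. apply sig_eq => /=. apply functional_extensionality => z; apply propositional_extensionality.
    rewrite !Eiff e. done. }
  have qproj_R : forall x y, qproj E x = qproj E y -> R (proj1_sig x) = R (proj1_sig y).
  { move=> x y e. have := f_equal (fun q => proj1_sig q y) e => /= e2. apply Eiff. rewrite e2. by apply Eiff. }
  have part3 : exists h : Quot E -> {f | Im f},
     homeomorphism (quot_topo tX E) (sub_topo tAmb Im) h /\
     forall x, proj1_sig (h (qproj E x)) = R (proj1_sig x).
  { have qsurj : forall q : Quot E, exists x, q = qproj E x.
    { move=> [S [x hx]]. exists x. apply sig_eq. exact hx. }
    have [qrep hqrep] := choice_fun qsurj.
    set h := fun q : Quot E => exist Im (R (proj1_sig (qrep q))) (ex_intro _ (qrep q) erefl).
    have hh : forall x, proj1_sig (h (qproj E x)) = R (proj1_sig x).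
    { move=> x. rewrite /h /=. apply qproj_R. by rewrite -hqrep. }
    have [frep hfrep] := choice_fun (fun y : {f | Im f} => proj2_sig y).
    exists h; split => //.
    exists (fun y => qproj E (frep y)). split; [|split; [|split]].
    - move=> q. rewrite {2}(hqrep q). apply qproj_eq. rewrite -hfrep. done.
    - move=> y. apply sig_eq. rewrite hh. by rewrite -hfrep.
    - move=> V [O [hO hV]]. exists (fun rho => O (R rho)); split; first exact (Rcont O hO).
      move=> x. rewrite hV hh. done.
    - move=> V [O' [hO' hV]].
      set U := fun rho => X rho /\ O' rho.
      have hU : relopen (ptopo (@Mtopo n)) X U.
      { split; first by move=> x [].
        exists O'; split => // x hx. rewrite /U; tauto. }
      have [_ [O2 [hO2 hiff]]] := OR U hU.
      exists O2; split => // y. rewrite -(hiff _ (proj2_sig y)). split.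
      + move=> hv. have := (proj1 (hV (frep y))) hv => ho. exists (proj1_sig (frep y)).
        split; [split; [exact (proj2_sig (frep y))|exact ho]|]. by rewrite -hfrep.
      + move=> [rho [[hx ho] hr]].
        have e : qproj E (exist _ rho hx) = qproj E (frep y).
        { apply qproj_eq. rewrite /= hr. exact (hfrep y). }
        rewrite -e. apply hV. exact ho. }
  have [l hl] := part1.
  split; first exact (ex_intro _ l hl).
  split; first exact part2.
  split; first exact part3.
  move=> rho0 hx0.
  have hgs : forall chi : Quo mul inv A -> CC, exists g, H chi -> chi <> (fun _ => CC1) -> chi (qmap mul inv A g) <> CC1.
  { move=> chi.
    case: (classic (exists g, chi (qmap mul inv A g) <> CC1)) => [[g hg]|hno].
    - exists g => _ _; exact hg.
    - exists one => hc hne. exfalso; apply hne. apply functional_extensionality => q.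
      have [g ->] := qmap_surj q. apply NNPP => h'; apply hno; exists g; exact h'. }
  have [gs hgs'] := choice_fun hgs.
  set F := List.map gs l.
  have hex : forall chi, In chi l -> exists e, 0 < e /\ (H chi -> chi <> (fun _ => CC1) -> forall rho,
             BM (rho0 (gs chi)) (rho (gs chi)) e -> BM (rho0 (gs chi)) (act chi rho (gs chi)) e -> False).
  { move=> chi _. case: (classic (H chi /\ chi <> (fun _ => CC1))) => [[hc hne]|hno]; last first.
    { exists 1; split; first lra. move=> hc hne; exfalso; apply hno; split => //. }
    set g := gs chi. have hw := hgs' chi hc hne. fold g in hw.
    set w := chi (qmap mul inv A g) in hw *.
    have hwu : unitC w := proj1 hc _.
    have [k hk] := unitary_nz (Ordinal hn) (proj1 hx0 g).
    set u := rho0 g (Ordinal hn) k in hk *.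
    have hN : 0 < Cnorm2 u.
    { have := Cnorm2_ge0 u. case: (Req_dec (Cnorm2 u) 0) => h0; last lra. by have := Cnorm2_0 h0. }
    have hD : 0 < cd2 w CC1.
    { have := cd2_ge0 w CC1. case: (Req_dec (cd2 w CC1) 0) => h0; last lra. by have := cd2_0 h0. }
    exists (Rmin (Cnorm2 u / 4) (cd2 w CC1 * Cnorm2 u / 32)).
    have hep : 0 < Rmin (Cnorm2 u / 4) (cd2 w CC1 * Cnorm2 u / 32).
    { apply Rmin_pos; [lra|]. apply Rmult_lt_0_compat; [nra|lra]. }
    split => // _ _ rho b1 b2.
    have e1 := Rmin_l (Cnorm2 u / 4) (cd2 w CC1 * Cnorm2 u / 32).
    have e2 := Rmin_r (Cnorm2 u / 4) (cd2 w CC1 * Cnorm2 u / 32).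
    set ee := Rmin (Cnorm2 u / 4) (cd2 w CC1 * Cnorm2 u / 32) in hep e1 e2 b1 b2.
    have c1 := b1 (Ordinal hn) k. have c2 := b2 (Ordinal hn) k.
    rewrite /act /scal in c2. fold w u in c2. fold u in c1.
    set v := rho g (Ordinal hn) k in c1 c2.
    have nb := cd2_norm_bound u v.
    have t1 := cd2_tri (Cmul w v) u v.
    have t2 : cd2 (Cmul w v) v = Cnorm2 v * cd2 w CC1.
    { rewrite -{2}(Cmul1 v) cd2_mulr. done. }
    have hv : Cnorm2 u / 4 <= Cnorm2 v by lra.
    have : Cnorm2 u / 4 * cd2 w CC1 <= Cnorm2 v * cd2 w CC1 by apply Rmult_le_compat_r; lra.
    rewrite cd2_sym in c2. lra. }
  have [eta [heta hP]] := fmin (l := l)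
     (P := fun chi e => H chi -> chi <> (fun _ => CC1) -> forall rho,
             BM (rho0 (gs chi)) (rho (gs chi)) e -> BM (rho0 (gs chi)) (act chi rho (gs chi)) e -> False)
     (fun chi e e' h he' hle hc hne rho b1 b2 =>
        h hc hne rho (fun i j => Rlt_le_trans _ _ _ (b1 i j) hle) (fun i j => Rlt_le_trans _ _ _ (b2 i j) hle)) hex.
  set W := fun rho => X rho /\ forall g, In g F -> BM (rho0 g) (rho g) eta.
  have Wopen : relopen (ptopo (@Mtopo n)) X W.
  { split; first by move=> x [].
    exists (fun rho => forall g, In g F -> BM (rho0 g) (rho g) eta); split; first apply G_open.
    move=> x hx; rewrite /W; tauto. }
  have Wdisj : forall chi rho, H chi -> W rho -> W (act chi rho) -> chi = (fun _ => CC1).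
  { move=> chi rho hc [hx hb1] [_ hb2]. apply NNPP => hne.
    have hin := hl chi hc.
    have hgF : In (gs chi) F by apply in_map.
    exact (hP chi hin hc hne rho (hb1 _ hgF) (hb2 _ hgF)). }
  have sheetS : forall chi, H chi -> relopen (ptopo (@Mtopo n)) X (img (act chi) W).
  { move=> chi hc. have hc' := H_conj hc. split.
    - move=> x [s0 [[hs0 _] <-]]. exact (proj1 (part2 _ _ hc hs0)).
    - exists (fun rho => forall g, In g F -> BM (rho0 g) (act (fun q => Cconj (chi q)) rho g) eta); split.
      + exact (actcont _ (fun rho => forall g, In g F -> BM (rho0 g) (rho g) eta) hc' (@G_open G n rho0 F eta)).
      + move=> x hx. split.
        * move=> [s0 [[hs0 hb] <-]]. rewrite act_conjK //.
        * move=> hb. exists (act (fun q => Cconj (chi q)) x). split; last exact: act_Kconj.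
          split => //. exact (proj1 (part2 _ _ hc' hx)). }
  have sheetInj : forall chi, H chi -> forall x x', img (act chi) W x -> img (act chi) W x' -> R x = R x' -> x = x'.
  { move=> chi hc x x' [s1 [hs1 <-]] [s2 [hs2 <-]]. rewrite !hRact // => e.
    have [chi' [hc' e2]] := hIO s1 s2 (proj1 hs1) (proj1 hs2) e.
    rewrite e2 in hs2. have := Wdisj chi' s1 hc' hs1 hs2 => e3. by rewrite e2 e3 act_one. }
  exists W. split; first by split => //; move=> g _ i j; rewrite cd2_refl.
  split; first exact Wopen.
  split; first exact (OR W Wopen).
  split; last split.
  - move=> chi hc. split; first exact (sheetS chi hc).
    split; [|split; [|split]].
    + move=> x [s0 [hs0 <-]]. exists s0; split => //. by rewrite hRact.
    + move=> y [s0 [hs0 <-]]. exists (act chi s0); split; [exists s0; split => //| exact: hRact].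
    + move=> x x' hx hx' e. exact (sheetInj chi hc x x' hx hx' e).
    + move=> U hUS. split.
      * move=> [_ [O1 [hO1 hiff1]]].
        have [_ [OS [hOS hiffS]]] := sheetS chi hc.
        have hUX : relopen (ptopo (@Mtopo n)) X U.
        { split; first by move=> x hx; exact (proj1 (sheetS chi hc) x (hUS x hx)).
          exists (fun rho => O1 rho /\ OS rho); split; first exact (Ginter _ _ hO1 hOS).
          move=> x hx. split.
          - move=> hu. have hs1 := hUS x hu. split; [exact (proj1 (hiff1 x hs1) hu)| exact (proj1 (hiffS x hx) hs1)].
          - move=> [o1 os]. have hs1 := proj2 (hiffS x hx) os. exact (proj2 (hiff1 x hs1) o1). }
        have [_ [O2 [hO2 hiff2]]] := OR U hUX.
        split.
        -- move=> f [x [hu <-]]. have [s0 [hs0 e0]] := hUS x hu. exists s0; split => //. by rewrite -e0 hRact.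
        -- exists O2; split => // f [s0 [hs0 <-]]. apply hiff2. exists (exist _ s0 (proj1 hs0)). done.
      * move=> [hsub [O2 [hO2 hiff2]]].
        split => //. exists (fun rho => O2 (R rho)); split; first exact (Rcont O2 hO2).
        move=> x hx. have hT : img R W (R x).
        { have [s0 [hs0 e0]] := hx. exists s0; split => //. by rewrite -e0 hRact. }
        split.
        -- move=> hu. apply (proj1 (hiff2 _ hT)). exists x; split => //.
        -- move=> ho. have [x' [hu' e']] := proj2 (hiff2 _ hT) ho.
           have := sheetInj chi hc x' x (hUS x' hu') hx e' => <-. exact hu'.
  - move=> chi rho hc hw hw'. exact (Wdisj chi rho hc hw hw').
  - move=> rho hx. split.
    + move=> [s0 [hs0 e0]]. have [chi [hc e2]] := hIO s0 rho (proj1 hs0) hx e0.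
      exists chi; split; first exact hc. exists s0; split; first exact hs0. by rewrite e2.
    + move=> [chi [hc [s0 [hs0 e0]]]]. exists s0; split => //. by rewrite -e0 hRact.
Qed.
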